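(* Let $a\in\mathbb{B}^2$ and $T_a:\mathbb{B}^2\to\mathbb{B}^2$, $T_a(z)=\frac{z-a}{1-\overline{a}z}$. Then for each $d\in\{t,j^*,w,s,p,b_{\cdot,2}\}$, $$\sup_{x,y\in\mathbb{B}^2,\ x\ne y}\frac{d_{\mathbb{B}^2}(T_a(x),T_a(y))}{d_{\mathbb{B}^2}(x,y)}\ge1+|a|.$$
   Context: $\mathbb{B}^2$ is the unit disk in $\mathbb{C}$; $S^{1}(x,r)$ is the circle of center $x$ and radius $r$. For a domain $G\subsetneq\mathbb{R}^n$ and $x\in G$, $d_G(x)=\inf\{|x-z|:z\in\partial G\}$. Intrinsic (quasi-)metrics: $t_G(x,y)=\frac{|x-y|}{|x-y|+d_G(x)+d_G(y)}$; $j^*_G(x,y)=\frac{|x-y|}{|x-y|+2\min\{d_G(x),d_G(y)\}}$; $s_G(x,y)=\frac{|x-y|}{\inf_{z\in\partial G}(|x-z|+|z-y|)}$; $p_G(x,y)=\frac{|x-y|}{\sqrt{|x-y|^2+4d_G(x)d_G(y)}}$; $b_{G,2}(x,y)=\sup_{z\in\partial G}\frac{|x-y|}{(|x-z|^2+|z-y|^2)^{1/2}}$; for convex $G$, $w_G(x,y)=\frac{|x-y|}{\min\{\inf_{\tilde y\in\tilde Y}|x-\tilde y|,\ \inf_{\tilde x\in\tilde X}|y-\tilde x|\}}$ with $\tilde X=\{\tilde x\in S^{n-1}(x,2d_G(x)):(x+\tilde x)/2\in\partial G\}$, $\tilde Y=\{\tilde y\in S^{n-1}(y,2d_G(y)):(y+\tilde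 y)/2\in\partial G\}$. *)

(* Defs.v *)
From Stdlib Require Import Reals.
From Coquelicot Require Import Coquelicot.
Open Scope R_scope.

Definition inB (x : C) : Prop := Cmod x < 1.
Definition bdB (z : C) : Prop := Cmod z = 1.

Definition dB (x : C) : R :=
  real (Glb_Rbar (fun r => exists z, bdB z /\ r = Cmod (x - z)%C)).

Definition t_B (x y : C) : R :=
  Cmod (x - y)%C / (Cmod (x - y)%C + dB x + dB y).

Definition jstar_B (x y : C) : R :=
  Cmod (x - y)%C / (Cmod (x - y)%C + 2 * Rmin (dB x) (dB y)).

Definition s_B (x y : C) : R :=
  Cmod (x - y)%C /
  real (Glb_Rbar (fun r => exists z, bdB z /\ r = Cmod (x - z)%C + Cmod (z - y)%C)).

Definition p_B (x y : C) : R :=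
  Cmod (x - y)%C / sqrt (Cmod (x - y)%C ^ 2 + 4 * dB x * dB y).

Definition b2_B (x y : C) : R :=
  real (Lub_Rbar (fun r => exists z, bdB z /\
     r = Cmod (x - y)%C / sqrt (Cmod (x - z)%C ^ 2 + Cmod (z - y)%C ^ 2))).

Definition tildeSet (x : C) (u : C) : Prop :=
  Cmod (u - x)%C = 2 * dB x /\ bdB ((x + u) / 2)%C.

Definition w_B (x y : C) : R :=
  Cmod (x - y)%C /
  Rmin (real (Glb_Rbar (fun r => exists yt, tildeSet y yt /\ r = Cmod (x - yt)%C)))
       (real (Glb_Rbar (fun r => exists xt, tildeSet x xt /\ r = Cmod (y - xt)%C))).

Inductive metric_kind := Mt | Mjstar | Mw | Ms | Mp | Mb2.

Definition metric (k : metric_kind) : C -> C -> R :=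
  match k with
  | Mt => t_B | Mjstar => jstar_B | Mw => w_B
  | Ms => s_B | Mp => p_B | Mb2 => b2_B
  end.

Definition T (a z : C) : C := ((z - a) / (1 - Cconj a * z))%C.

(* Main.v *)
Require Import Defs.
From Stdlib Require Import Reals Lra Psatz.
From Coquelicot Require Import Coquelicot.
Open Scope R_scope.

Lemma glb_eq (E : R -> Prop) m : (forall r, E r -> m <= r) -> E m ->
  real (Glb_Rbar E) = m.
Proof.
  intros H1 H2. rewrite (is_glb_Rbar_unique E m); [reflexivity|].
  split.
  - intros x Hx; simpl; apply H1; exact Hx.
  - intros b Hb; apply Hb; exact H2.
Qed.

Lemma lub_eq (E : R -> Prop) m : (forall r, E r -> r <= m) -> E m ->
  real (Lub_Rbar E) = m.
Proof.
  intros H1 H2. rewrite (is_lub_Rbar_unique E m); [reflexivity|].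
  split.
  - intros x Hx; simpl; apply H1; exact Hx.
  - intros b Hb; apply Hb; exact H2.
Qed.

Lemma Cmod_sub_ge (x y : C) : Cmod x - Cmod y <= Cmod (x - y)%C.
Proof.
  assert (Cmod x <= Cmod (x - y)%C + Cmod y).
  { replace x with ((x - y) + y)%C at 1 by ring. apply Cmod_triangle. }
  lra.
Qed.

Lemma Cmod_sym (x y : C) : Cmod (x - y)%C = Cmod (y - x)%C.
Proof. replace (y - x)%C with (- (x - y))%C by ring. now rewrite Cmod_opp. Qed.

Section Ray.
Variable v : C.
Hypothesis Hv : Cmod v = 1.
Definition pt (c : R) : C := (RtoC c * v)%C.

Lemma pt_mod c : Cmod (pt c) = Rabs c.
Proof. unfold pt. rewrite Cmod_mult, Cmod_R, Hv. ring. Qed.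

Lemma pt_sub p q : Cmod (pt p - pt q)%C = Rabs (p - q).
Proof.
  unfold pt. replace (RtoC p * v - RtoC q * v)%C with (RtoC (p - q) * v)%C.
  - rewrite Cmod_mult, Cmod_R, Hv. ring.
  - rewrite RtoC_minus. ring.
Qed.

Lemma pt_1 : pt 1 = v.
Proof. unfold pt. ring. Qed.

Lemma dist_bd_ge x z : bdB z -> 1 - Cmod x <= Cmod (x - z)%C.
Proof.
  intro Hz. unfold bdB in Hz. rewrite Cmod_sym.
  pose proof (Cmod_sub_ge z x). lra.
Qed.

Lemma dB_pt p : 0 <= p < 1 -> dB (pt p) = 1 - p.
Proof.
  intros Hp. unfold dB. apply glb_eq.
  - intros r [z [Hz ->]]. pose proof (dist_bd_ge (pt p) z Hz).
    rewrite pt_mod, Rabs_pos_eq in H by lra. exact H.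
  - exists v. split; [exact Hv|]. replace (pt p - v)%C with (pt p - pt 1)%C by (now rewrite pt_1). rewrite pt_sub.
    rewrite Rabs_left1; lra.
Qed.

Lemma s_den_pt p q : 0 <= p < 1 -> 0 <= q < 1 ->
  real (Glb_Rbar (fun r => exists z, bdB z /\ r = Cmod (pt p - z)%C + Cmod (z - pt q)%C))
  = 2 - p - q.
Proof.
  intros Hp Hq. apply glb_eq.
  - intros r [z [Hz ->]]. pose proof (dist_bd_ge (pt p) z Hz).
    pose proof (dist_bd_ge (pt q) z Hz).
    rewrite pt_mod, Rabs_pos_eq in H, H0 by lra. rewrite (Cmod_sym z). lra.
  - exists v. split; [exact Hv|]. rewrite <- pt_1. rewrite !pt_sub.
    rewrite Rabs_left1 by lra. rewrite Rabs_pos_eq by lra. lra.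
Qed.

Lemma b2_pt p q : 0 <= p < 1 -> 0 <= q < 1 ->
  b2_B (pt p) (pt q) = Rabs (p - q) / sqrt ((1 - p) ^ 2 + (1 - q) ^ 2).
Proof.
  intros Hp Hq. unfold b2_B. apply lub_eq.
  - intros r [z [Hz ->]]. pose proof (dist_bd_ge (pt p) z Hz).
    pose proof (dist_bd_ge (pt q) z Hz).
    rewrite pt_mod, Rabs_pos_eq in H, H0 by lra. rewrite (Cmod_sym z).
    rewrite pt_sub. unfold Rdiv. apply Rmult_le_compat_l; [apply Rabs_pos|].
    apply Rinv_le_contravar.
    + apply sqrt_lt_R0. nra.
    + apply sqrt_le_1_alt. nra.
  - exists v. split; [exact Hv|]. rewrite <- pt_1. rewrite !pt_sub.
    rewrite (Rabs_left1 (p-1)) by lra. rewrite (Rabs_pos_eq (1-q)) by lra.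
    do 3 f_equal; ring.
Qed.

Lemma tilde_glb c d : 0 <= c < 1 -> 0 <= d < 1 ->
  real (Glb_Rbar (fun r => exists yt, tildeSet (pt d) yt /\ r = Cmod (pt c - yt)%C))
  = 2 - c - d.
Proof.
  intros Hc Hd. apply glb_eq.
  - intros r [yt [[H1 H2] ->]]. unfold bdB in H2.
    assert (Cmod (pt d + yt)%C = 2).
    { replace (pt d + yt)%C with (RtoC 2 * ((pt d + yt) / 2))%C.
      - rewrite Cmod_mult, H2, Cmod_R, Rabs_pos_eq; lra.
      - field; intro E; injection E; lra. }
    pose proof (Cmod_sub_ge (pt d + yt)%C (pt d)).
    replace (pt d + yt - pt d)%C with yt in H0 by ring.
    pose proof (Cmod_sub_ge yt (pt c)). rewrite Cmod_sym in H3.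
    rewrite !pt_mod, !Rabs_pos_eq in * by lra. lra.
  - exists (pt (2 - d)). split; [split|].
    + rewrite pt_sub, dB_pt by lra. rewrite Rabs_pos_eq; lra.
    + unfold bdB. replace ((pt d + pt (2 - d)) / 2)%C with v. exact Hv.
      unfold pt. rewrite RtoC_minus. field; intro E; injection E; lra.
    + rewrite pt_sub. rewrite Rabs_left1; lra.
Qed.

End Ray.

Lemma unit_dir (a : C) : exists v, Cmod v = 1 /\ a = (RtoC (- Cmod a) * v)%C.
Proof.
  destruct (Ceq_dec a 0) as [E|E].
  - exists 1%C. split; [apply Cmod_1|]. subst a. rewrite Cmod_0.
    apply injective_projections; simpl; ring.
  - pose proof (proj1 (Cmod_gt_0 a) E) as Hp.
    exists (RtoC (- / Cmod a) * a)%C. split.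
    + rewrite Cmod_mult, Cmod_R, Rabs_left1.
      * field. lra.
      * assert (0 < / Cmod a) by (apply Rinv_0_lt_compat; lra). lra.
    + rewrite Cmult_assoc, <- RtoC_mult.
      replace (- Cmod a * - / Cmod a) with 1 by (field; lra). ring.
Qed.

Lemma conj_R r (v : C) : Cconj (RtoC r * v)%C = (RtoC r * Cconj v)%C.
Proof. apply injective_projections; simpl; ring. Qed.

Lemma T_pt (a v : C) al s : Cmod v = 1 -> a = (RtoC (- al) * v)%C ->
  0 <= al < 1 -> 0 <= s < 1 ->
  T a (pt v s) = pt v ((s + al) / (1 + al * s)).
Proof.
  intros Hv Ha Hal Hs. unfold T, pt.
  assert (Hd : (1 - Cconj a * (RtoC s * v))%C = RtoC (1 + al * s)).
  { rewrite Ha, conj_R.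
    replace (RtoC (- al) * Cconj v * (RtoC s * v))%C
      with (RtoC (- al) * RtoC s * (v * Cconj v))%C by ring.
    rewrite <- Cmod2_conj, Hv. apply injective_projections; simpl; ring. }
  rewrite Hd, Ha. rewrite RtoC_div by nra. rewrite RtoC_plus, RtoC_plus, RtoC_mult.
  rewrite RtoC_opp. field.
  rewrite <- RtoC_mult, <- RtoC_plus. intro E. injection E. nra.
Qed.

Definition F (k : metric_kind) (p q : R) : R :=
  match k with
  | Mt => (q - p) / (2 - 2 * p)
  | Mjstar | Mw | Ms => (q - p) / (2 - p - q)
  | Mp => (q - p) / sqrt ((q - p) ^ 2 + 4 * (1 - p) * (1 - q))
  | Mb2 => (q - p) / sqrt ((1 - p) ^ 2 + (1 - q) ^ 2)
  end.

Lemma metric_pt (v : C) k p q : Cmod v = 1 -> 0 <= p -> p < q -> q < 1 ->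
  metric k (pt v p) (pt v q) = F k p q.
Proof.
  intros Hv H1 H2 H3.
  assert (Hpq : Rabs (p - q) = q - p) by (rewrite Rabs_left1; lra).
  destruct k; simpl.
  - unfold t_B. rewrite pt_sub, !dB_pt by (auto; lra). rewrite Hpq. replace (q - p + (1 - p) + (1 - q)) with (2 - 2*p) by ring. reflexivity.
  - unfold jstar_B. rewrite pt_sub, !dB_pt by (auto; lra). rewrite Hpq.
    rewrite Rmin_right by lra. replace (q - p + 2 * (1 - q)) with (2 - p - q) by ring. reflexivity.
  - unfold w_B. rewrite pt_sub by auto. rewrite !tilde_glb by (auto; lra). rewrite Hpq.
    replace (2 - q - p) with (2 - p - q) by ring. rewrite Rmin_left by lra. reflexivity.
  - unfold s_B. rewrite pt_sub by auto. rewrite s_den_pt by (auto; lra). rewrite Hpq. reflexivity.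
  - unfold p_B. rewrite pt_sub, !dB_pt by (auto; lra). rewrite Hpq. reflexivity.
  - rewrite b2_pt by (auto; lra). rewrite Hpq. reflexivity.
Qed.

Lemma lt_div M X Y : 0 < Y -> M * Y < X -> M < X / Y.
Proof.
  intros HY H. apply Rmult_lt_reg_r with Y; auto.
  unfold Rdiv. rewrite Rmult_assoc, Rinv_l, Rmult_1_r by lra. exact H.
Qed.

Lemma sqrt_sq_mul c Q : 0 <= c -> 0 <= Q -> sqrt (c ^ 2 * Q) = c * sqrt Q.
Proof.
  intros Hc HQ. rewrite sqrt_mult_alt by (apply pow2_ge_0). rewrite sqrt_pow2 by auto. reflexivity.
Qed.

Section R.
Variables al s M : R.
Hypothesis Ha : 0 <= al < 1.
Hypothesis Hs : 0 < s <= 1/2.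
Hypothesis HM : M + 8 * s <= 1 + al.

Lemma HD : 0 < 1 + al * s.
Proof. nra. Qed.

Lemma Hb : (s + al) / (1 + al * s) - al = s * (1 - al) * (1 + al) / (1 + al * s).
Proof. pose proof HD. field. lra. Qed.

Lemma H1b : 1 - (s + al) / (1 + al * s) = (1 - al) * (1 - s) / (1 + al * s).
Proof. pose proof HD. field. lra. Qed.

Lemma ratio_js :
  let b := (s + al) / (1 + al * s) in
  (b - al) / (2 - al - b) / ((s - 0) / (2 - 0 - s)) > M.
Proof.
  intro b. pose proof HD as HD. pose proof Hb as Hb. pose proof H1b as H1b. fold b in Hb, H1b.
  replace (2 - al - b) with ((1 - al) + (1 - b)) by ring. rewrite Hb, H1b.
  replace (s * (1 - al) * (1 + al) / (1 + al * s) / (1 - al + (1 - al) * (1 - s) / (1 + al * s)) / ((s - 0) / (2 - 0 - s)))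
    with ((1 + al) * (2 - s) / (2 - s + al * s)).
  + apply lt_div; [nra|]. destruct (Rle_lt_dec M 0).
    * assert (0 <= al * s) by nra. nra.
    * assert (M * (al * s) <= (1 + al) * (al * s)) by (apply Rmult_le_compat_r; nra).
      assert (al * s <= s) by nra. assert ((1 + al) * (al * s) <= 2 * s) by nra.
      assert (M * (2 - s) <= (1 + al - 8 * s) * (2 - s)) by (apply Rmult_le_compat_r; lra). nra.
  + field. repeat split; try lra; try nra.
Qed.


Lemma ratio_t :
  let b := (s + al) / (1 + al * s) in
  (b - al) / (2 - 2 * al) / ((s - 0) / (2 - 2 * 0)) > M.
Proof.
  intro b. pose proof HD as HD. pose proof Hb as Hb. fold b in Hb. rewrite Hb.
  replace (s * (1 - al) * (1 + al) / (1 + al * s) / (2 - 2 * al) / ((s - 0) / (2 - 2 * 0)))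
    with ((1 + al) / (1 + al * s)) by (field; repeat split; lra).
  apply lt_div; auto. destruct (Rle_lt_dec M 0).
  + assert (0 <= al * s) by nra. nra.
  + assert (M * (al * s) <= (1 + al) * (al * s)) by (apply Rmult_le_compat_r; nra).
    assert (al * s <= s) by nra. assert ((1 + al) * (al * s) <= 2 * s) by nra. nra.
Qed.

Lemma ratio_p :
  let b := (s + al) / (1 + al * s) in
  (b - al) / sqrt ((b - al) ^ 2 + 4 * (1 - al) * (1 - b)) /
  ((s - 0) / sqrt ((s - 0) ^ 2 + 4 * (1 - 0) * (1 - s))) > M.
Proof.
  intro b. pose proof HD as HD. pose proof Hb as Hb. pose proof H1b as H1b. fold b in Hb, H1b.
  set (Q := s ^ 2 * (1 + al) ^ 2 + 4 * (1 - s) * (1 + al * s)).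
  assert (HQ : 0 < Q) by (unfold Q; nra).
  replace ((b - al) ^ 2 + 4 * (1 - al) * (1 - b)) with (((1 - al) / (1 + al * s)) ^ 2 * Q)
    by (rewrite Hb, H1b; unfold Q; field; lra).
  rewrite sqrt_sq_mul by (try apply Rlt_le; try apply Rdiv_lt_0_compat; lra).
  replace ((s - 0) ^ 2 + 4 * (1 - 0) * (1 - s)) with ((2 - s) ^ 2) by ring.
  rewrite sqrt_pow2 by lra. rewrite Hb.
  assert (HsQ : 0 < sqrt Q) by (apply sqrt_lt_R0; auto).
  replace (s * (1 - al) * (1 + al) / (1 + al * s) / ((1 - al) / (1 + al * s) * sqrt Q) /
    ((s - 0) / (2 - s))) with ((1 + al) * (2 - s) / sqrt Q) by (field; repeat split; lra).
  apply lt_div; auto. destruct (Rle_lt_dec M 0).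
  + nra.
  + assert (sqrt Q <= 2 - s + 2 * al * s).
    { rewrite <- (sqrt_pow2 (2 - s + 2 * al * s)) by nra. apply sqrt_le_1_alt.
      unfold Q. assert (0 <= al * s * (1 - s)) by (apply Rmult_le_pos; nra).
      assert (0 <= al * s * s) by nra. assert (0 <= al * al * s * s) by nra. nra. }
    assert (M * sqrt Q <= M * (2 - s + 2 * al * s)) by (apply Rmult_le_compat_l; lra).
    assert (M * (al * s) <= (1 + al) * (al * s)) by (apply Rmult_le_compat_r; nra).
    assert (al * s <= s) by nra. assert ((1 + al) * (al * s) <= 2 * s) by nra.
    assert (M * (2 - s) <= (1 + al - 8 * s) * (2 - s)) by (apply Rmult_le_compat_r; lra). nra.
Qed.

Lemma ratio_b2 :
  let b := (s + al) / (1 + al * s) in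
  (b - al) / sqrt ((1 - al) ^ 2 + (1 - b) ^ 2) /
  ((s - 0) / sqrt ((1 - 0) ^ 2 + (1 - s) ^ 2)) > M.
Proof.
  intro b. pose proof HD as HD. pose proof Hb as Hb. pose proof H1b as H1b. fold b in Hb, H1b.
  set (Q := (1 + al * s) ^ 2 + (1 - s) ^ 2).
  assert (HQ : 0 < Q) by (unfold Q; nra).
  replace ((1 - al) ^ 2 + (1 - b) ^ 2) with (((1 - al) / (1 + al * s)) ^ 2 * Q)
    by (rewrite H1b; unfold Q; field; lra).
  rewrite sqrt_sq_mul by (try apply Rlt_le; try apply Rdiv_lt_0_compat; lra).
  set (Y := (1 - 0) ^ 2 + (1 - s) ^ 2).
  assert (HY : 1 <= Y) by (unfold Y; nra).
  rewrite Hb.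
  assert (HsQ : 0 < sqrt Q) by (apply sqrt_lt_R0; auto).
  assert (HsY : 0 < sqrt Y) by (apply sqrt_lt_R0; lra).
  replace (s * (1 - al) * (1 + al) / (1 + al * s) / ((1 - al) / (1 + al * s) * sqrt Q) /
    ((s - 0) / sqrt Y)) with ((1 + al) * sqrt Y / sqrt Q) by (field; repeat split; lra).
  apply lt_div; auto. destruct (Rle_lt_dec M 0).
  + nra.
  + assert (sqrt Q <= (1 + 3 * s) * sqrt Y).
    { rewrite <- sqrt_sq_mul by lra. apply sqrt_le_1_alt.
      assert (EQ : Q = Y + 2 * (al * s) + (al * s) ^ 2) by (unfold Q, Y; ring).
      rewrite EQ. assert (0 <= al * s <= s) by nra.
      assert ((al * s) ^ 2 <= s) by nra. assert (6 * s <= 6 * s * Y) by nra. nra. }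
    assert (M * sqrt Q <= M * ((1 + 3 * s) * sqrt Y)) by (apply Rmult_le_compat_l; lra).
    assert (M * (1 + 3 * s) < 1 + al) by nra.
    assert (M * (1 + 3 * s) * sqrt Y < (1 + al) * sqrt Y) by (apply Rmult_lt_compat_r; lra).
    nra.
Qed.

End R.

Theorem lemma4p9 (a : C) (ha : inB a) (k : metric_kind) (M : R)
  (hM : M < 1 + Cmod a) :
  exists x y : C, inB x /\ inB y /\ x <> y /\
    metric k (T a x) (T a y) / metric k x y > M.
Proof.
  destruct (unit_dir a) as [v [Hv Ha]].
  assert (Hal : 0 <= Cmod a < 1) by (split; [apply Cmod_ge_0 | exact ha]).
  set (al := Cmod a) in *.
  set (s := Rmin (1/2) ((1 + al - M) / 8)).
  assert (Hs : 0 < s <= 1/2).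
  { unfold s. split; [apply Rmin_glb_lt; lra | apply Rmin_l]. }
  assert (HM : M + 8 * s <= 1 + al).
  { pose proof (Rmin_r (1/2) ((1 + al - M) / 8)). fold s in H. lra. }
  exists (pt v 0), (pt v s). split; [|split; [|split]].
  - unfold inB. rewrite pt_mod by auto. rewrite Rabs_R0. lra.
  - unfold inB. rewrite pt_mod by auto. rewrite Rabs_pos_eq; lra.
  - intro E. pose proof (pt_sub v Hv 0 s) as H. rewrite E in H.
    replace (pt v s - pt v s)%C with (RtoC 0) in H by ring. rewrite Cmod_0 in H.
    rewrite Rabs_left1 in H; lra.
  - assert (Hal' : 0 <= al < 1) by lra.
    rewrite (T_pt a v al 0 Hv Ha Hal') by lra.
    rewrite (T_pt a v al s Hv Ha Hal') by lra.
    replace ((0 + al) / (1 + al * 0)) with al by (field; lra).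
    pose proof (Hb al s Hal' Hs) as Hb'. pose proof (H1b al s Hal' Hs) as H1b'.
    pose proof (HD al s Hal' Hs) as HD'.
    assert (0 < s * (1 - al) * (1 + al) / (1 + al * s)).
    { apply Rdiv_lt_0_compat; auto. apply Rmult_lt_0_compat; [apply Rmult_lt_0_compat|]; lra. }
    assert (0 < (1 - al) * (1 - s) / (1 + al * s)).
    { apply Rdiv_lt_0_compat; auto. apply Rmult_lt_0_compat; lra. }
    rewrite !metric_pt by (auto; lra).
    destruct k; cbn [F].
    + exact (ratio_t al s M Hal' Hs HM).
    + exact (ratio_js al s M Hal' Hs HM).
    + exact (ratio_js al s M Hal' Hs HM).
    + exact (ratio_js al s M Hal' Hs HM).
    + exact (ratio_p al s M Hal' Hs HM).
    + exact (ratio_b2 al s M Hal' Hs HM).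
Qed.
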